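(* Let $\{\phi_i\}_{i=1}^n$ be a geometrically uniform frame for $\mathbb{C}^m$ with frame operator $S=\sum_i\phi_i\phi_i^*$, and let $\mu_i=S^{-1/2}\phi_i$ be its canonical tight frame vectors. Then for every collection $\mu'_1,\dots,\mu'_n\in\mathbb{C}^m$ forming a normalized tight frame (i.e. $\sum_{i=1}^n\mu'_i\mu_i'^*=I_m$), $$\sum_{i=1}^n|\langle\phi_i,\mu'_i\rangle|^2\le\sum_{i=1}^n|\langle\phi_i,\mu_i\rangle|^2 .$$
   Context: Inner product $\langle x,y\rangle=x^*y$. A geometrically uniform (GU) frame is a set $\{\phi_i=U_i\phi\}_{i=1}^n$ spanning $\mathbb{C}^m$, where $\{U_1,\dots,U_n\}$ is an abelian group of $n$ distinct unitary $m\times m$ matrices. $S^{-1/2}$ is the positive definite square root of $S^{-1}$. A normalized tight frame is a set of vectors whose frame operator equals the identity. *)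

(* Defs.v *)
From HB Require Import structures.
From mathcomp Require Import all_boot all_order all_algebra.
Set Implicit Arguments. Unset Strict Implicit. Unset Printing Implicit Defensive.
Import Order.TTheory GRing.Theory Num.Theory.
Local Open Scope ring_scope.

Definition adjmx (C : numClosedFieldType) m n (A : 'M[C]_(m, n)) : 'M[C]_(n, m) :=
  map_mx (@Num.conj C) (trmx A).

Definition inprod (C : numClosedFieldType) m (x y : 'cV[C]_m) : C :=
  (adjmx x *m y) 0 0.

Definition posdefmx (C : numClosedFieldType) m (A : 'M[C]_m) : Prop :=
  adjmx A = A /\ forall v : 'cV[C]_m, v != 0 -> 0 < inprod v (A *m v).

Definition abelian_unitary_group (C : numClosedFieldType) m n
    (U : 'I_n -> 'M[C]_m) : Prop :=
  [/\ injective U,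
      forall i, U i *m adjmx (U i) = 1%:M,
      exists i, U i = 1%:M
    & [/\ forall i j, exists k, U i *m U j = U k,
      forall i, exists k, U k = invmx (U i)
    & forall i j, U i *m U j = U j *m U i]].

Definition spans (C : numClosedFieldType) m n (phi : 'I_n -> 'cV[C]_m) : Prop :=
  row_full (\matrix_(i < n) (phi i)^T).

Definition frame_op (C : numClosedFieldType) m n (phi : 'I_n -> 'cV[C]_m) : 'M[C]_m :=
  \sum_(i < n) phi i *m adjmx (phi i).

(* Main.v *)
Require Import Defs.
From HB Require Import structures.
From mathcomp Require Import all_boot all_order all_algebra.
From mathcomp Require Import ring.
Import Order.TTheory GRing.Theory Num.Theory.
Set Implicit Arguments. Unset Strict Implicit.
Local Open Scope ring_scope.
Section Adj.
Variable C : numClosedFieldType.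

Lemma adjmxK m n (A : 'M[C]_(m,n)) : adjmx (adjmx A) = A.
Proof. by apply/matrixP=> i j; rewrite !mxE conjCK. Qed.

Lemma adjmxM m n p (A : 'M[C]_(m,n)) (B : 'M[C]_(n,p)) :
  adjmx (A *m B) = adjmx B *m adjmx A.
Proof. by rewrite /adjmx trmx_mul map_mxM. Qed.

Lemma adjmxD m n (A B : 'M[C]_(m,n)) : adjmx (A + B) = adjmx A + adjmx B.
Proof. by apply/matrixP=> i j; rewrite !mxE rmorphD. Qed.

Lemma adjmxZ m n (a : C) (A : 'M[C]_(m,n)) : adjmx (a *: A) = a^* *: adjmx A.
Proof. by apply/matrixP=> i j; rewrite !mxE rmorphM. Qed.

Lemma adjmxN m n (A : 'M[C]_(m,n)) : adjmx (- A) = - adjmx A.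
Proof. by apply/matrixP=> i j; rewrite !mxE rmorphN. Qed.

Lemma adjmx1 m : adjmx (1%:M : 'M[C]_m) = 1%:M.
Proof. by rewrite /adjmx tr_scalar_mx map_scalar_mx rmorph1. Qed.

Lemma adjmx_sum m n I (r : seq I) (F : I -> 'M[C]_(m,n)) :
  adjmx (\sum_(i <- r) F i) = \sum_(i <- r) adjmx (F i).
Proof. by apply/matrixP=> i j; rewrite /adjmx !mxE !summxE rmorph_sum; apply: eq_bigr => k _; rewrite !mxE. Qed.

Lemma inprod_conj m (x y : 'cV[C]_m) : inprod y x = (inprod x y)^*.
Proof.
rewrite /inprod !mxE rmorph_sum; apply: eq_bigr => k _.
by rewrite !mxE rmorphM /= conjCK mulrC.
Qed.

Lemma inprodE m (x y : 'cV[C]_m) : inprod x y = \tr (adjmx x *m y).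
Proof. by rewrite /inprod /mxtrace big_ord1. Qed.

Lemma inprod_adj m (A : 'M[C]_m) (x y : 'cV[C]_m) :
  inprod x (A *m y) = inprod (adjmx A *m x) y.
Proof. by rewrite /inprod adjmxM adjmxK mulmxA. Qed.

Lemma inprodDr m (x y z : 'cV[C]_m) : inprod x (y + z) = inprod x y + inprod x z.
Proof. by rewrite /inprod mulmxDr mxE. Qed.
Lemma inprodDl m (x y z : 'cV[C]_m) : inprod (y + z) x = inprod y x + inprod z x.
Proof. by rewrite /inprod adjmxD mulmxDl mxE. Qed.
Lemma inprodZr m a (x y : 'cV[C]_m) : inprod x (a *: y) = a * inprod x y.
Proof. by rewrite /inprod -scalemxAr mxE. Qed.
Lemma inprodZl m a (x y : 'cV[C]_m) : inprod (a *: x) y = a^* * inprod x y.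
Proof. by rewrite /inprod adjmxZ -scalemxAl mxE. Qed.
Lemma inprodNl m (x y : 'cV[C]_m) : inprod (- x) y = - inprod x y.
Proof. by rewrite /inprod adjmxN mulNmx mxE. Qed.
Lemma inprodNr m (x y : 'cV[C]_m) : inprod x (- y) = - inprod x y.
Proof. by rewrite /inprod mulmxN mxE. Qed.
Lemma inprod0r m (x : 'cV[C]_m) : inprod x 0 = 0.
Proof. by rewrite /inprod mulmx0 mxE. Qed.

Lemma tr_frame m n (A : 'M[C]_m) (v : 'I_n -> 'cV[C]_m) :
  \sum_i inprod (v i) (A *m v i) = \tr (A *m frame_op v).
Proof.
rewrite /frame_op mulmx_sumr raddf_sum; apply: eq_bigr => i _.
by rewrite inprodE mxtrace_mulC mulmxA.
Qed.


Lemma posdef_ge0 m (A : 'M[C]_m) v : posdefmx A -> 0 <= inprod v (A *m v).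
Proof.
case=> _ hA; have [->|nz] := eqVneq v 0; first by rewrite mulmx0 inprod0r.
exact: ltW (hA _ nz).
Qed.

Lemma posdef_unit m (A : 'M[C]_m) : posdefmx A -> A \in unitmx.
Proof.
move=> [_ hA]; rewrite unitmxE unitfE -det_tr; apply/negP => /det0P [v vnz hv].
have h : A *m v^T = 0 by rewrite -[A]trmxK -trmx_mul hv trmx0.
have : v^T != 0 by apply: contraNneq vnz => /eqP; rewrite -trmx0 => /eqP /trmx_inj ->.
by move/hA; rewrite h inprod0r ltxx.
Qed.

Lemma frame_col m (D : 'M[C]_m) : frame_op (fun j => col j D) = D *m adjmx D.
Proof.
apply/matrixP=> a b; rewrite /frame_op summxE !mxE; apply: eq_bigr => j _.
by rewrite !mxE big_ord1 !mxE.
Qed.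

Lemma posdef_sqrt_uniq m (P Q : 'M[C]_m) :
  posdefmx P -> posdefmx Q -> P *m P = Q *m Q -> P = Q.
Proof.
move=> hP hQ e; set D := P - Q.
have hD : adjmx D = D by rewrite /D adjmxD adjmxN hP.1 hQ.1.
have e0 : P *m D + D *m Q = 0.
  by rewrite /D mulmxBr mulmxBl e addrA subrK subrr.
have etr : \tr (D *m (P *m D)) + \tr (D *m (Q *m D)) = 0.
  have -> : \tr (D *m (Q *m D)) = \tr (D *m (D *m Q)).
    by rewrite mxtrace_mulC -mulmxA mxtrace_mulC mulmxA.
  by rewrite -raddfD /= -mulmxDr e0 mulmx0 linear0.
have tP A : \tr (D *m (A *m D)) = \sum_j inprod (col j D) (A *m col j D).
  by rewrite tr_frame frame_col hD mxtrace_mulC mulmxA.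
rewrite !tP -big_split /= in etr.
have z j : col j D = 0.
  have h1 := @posdef_ge0 _ _ (col j D) hP; have h2 := @posdef_ge0 _ _ (col j D) hQ.
  have := @psumr_eq0P _ _ xpredT _ (fun j _ => addr_ge0 (@posdef_ge0 _ _ (col j D) hP) (@posdef_ge0 _ _ (col j D) hQ)) etr j isT.
  move/eqP; rewrite paddr_eq0 // => /andP [/eqP h _].
  have [//|nz] := eqVneq (col j D) 0; by move: (hP.2 _ nz); rewrite h ltxx.
apply/eqP; rewrite -subr_eq0; apply/eqP/matrixP => i j.
by have := congr1 (fun M : 'cV[C]_m => M i 0) (z j); rewrite !mxE.
Qed.


Lemma cs_form m (W : 'M[C]_m) (x y : 'cV[C]_m) :
  adjmx W = W -> (forall u, 0 <= inprod u (W *m u)) ->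
  0 < inprod x (W *m x) ->
  `|inprod x (W *m y)| ^+ 2 <= inprod x (W *m x) * inprod y (W *m y).
Proof.
move=> hW hpos.
set c := inprod x (W *m x); set a := inprod x (W *m y); set d := inprod y (W *m y).
move=> cpos.
have hyx : inprod y (W *m x) = a^*.
  by rewrite inprod_adj hW inprod_conj.
have cc : c^* = c by rewrite geC0_conj // ltW.
have := hpos (c *: y - a *: x).
rewrite mulmxBr -!scalemxAr inprodDl inprodNl !inprodZl !inprodDr !inprodNr !inprodZr.
rewrite -/c -/d hyx -/a cc normCK.
have -> : c * (c * d - a * a^*) - a^* * (c * a - a * c) = c * (c * d - a * a^*) by ring.
by rewrite pmulr_rge0 // subr_ge0.
Qed.
End Adj.
Lemma frame_comm (C : numClosedFieldType) m n (U : 'I_n -> 'M[C]_m) phi0 j :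
  abelian_unitary_group U ->
  U j *m frame_op (fun i => U i *m phi0) = frame_op (fun i => U i *m phi0) *m U j.
Proof.
case=> Uinj Uu _ [Uc _ _].
have Uu' i : adjmx (U i) *m U i = 1%:M by apply: mulmx1C.
pose h i := odflt i [pick k | U j *m U i == U k].
have hP i : U j *m U i = U (h i).
  rewrite /h; case: pickP => [k /eqP //|/= none].
  by have [k hk] := Uc j i; move: (none k); rewrite hk eqxx.
have hinj : injective h.
  move=> i1 i2 e; apply: Uinj.
  by rewrite -[U i1]mul1mx -(Uu' j) -mulmxA hP e -hP mulmxA Uu' mul1mx.
have key : U j *m frame_op (fun i => U i *m phi0) *m adjmx (U j)
           = frame_op (fun i => U i *m phi0).
  rewrite /frame_op mulmx_sumr mulmx_suml [RHS](reindex_inj hinj) /=.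
  by apply: eq_bigr => i _; rewrite -hP !adjmxM !mulmxA.
by rewrite -{2}key -!mulmxA Uu' mulmx1.
Qed.

Theorem mainTheorem6 (C : numClosedFieldType) (m n : nat)
    (U : 'I_n -> 'M[C]_m) (phi0 : 'cV[C]_m) (T : 'M[C]_m)
    (mu' : 'I_n -> 'cV[C]_m) :
  abelian_unitary_group U ->
  spans (fun i => U i *m phi0) ->
  posdefmx T -> T *m T = invmx (frame_op (fun i => U i *m phi0)) ->
  frame_op mu' = 1%:M ->
  \sum_(i < n) `|inprod (U i *m phi0) (mu' i)| ^+ 2
    <= \sum_(i < n) `|inprod (U i *m phi0) (T *m (U i *m phi0))| ^+ 2.
Proof.
move=> hU _ hT eT hmu.
set S := frame_op _ in eT.
have Uu i : U i *m adjmx (U i) = 1%:M by case: hU.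
have Uu' i : adjmx (U i) *m U i = 1%:M by apply: mulmx1C.
have Tu := posdef_unit hT.
have Su : S \in unitmx by rewrite -unitmx_inv -eT unitmx_mul Tu.
have SiU i : invmx S *m U i = U i *m invmx S.
  have := frame_comm phi0 i hU; rewrite -/S => e.
  by rewrite -[invmx S *m U i]mulmx1 -(mulmxV Su) !mulmxA -[invmx S *m U i *m S]mulmxA e
     mulmxA mulVmx // mul1mx.
have TU i : T *m U i = U i *m T.
  pose Q := adjmx (U i) *m T *m U i.
  have hQ : posdefmx Q.
    split; first by rewrite /Q !adjmxM adjmxK hT.1 mulmxA.
    move=> v nz; rewrite /Q -!mulmxA inprod_adj adjmxK; apply: hT.2.
    apply: contraNneq nz => e; by rewrite -[v]mul1mx -(Uu' i) -mulmxA e mulmx0.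
  have eQ : T = Q.
    apply: posdef_sqrt_uniq => //.
    by rewrite /Q !mulmxA -[_ *m U i *m adjmx (U i)]mulmxA Uu mulmx1 -[_ *m T *m T]mulmxA eT -mulmxA SiU mulmxA Uu' mul1mx.
  by rewrite {2}eQ /Q !mulmxA Uu mul1mx.
set c := inprod phi0 (T *m phi0).
have ci i : inprod (U i *m phi0) (T *m (U i *m phi0)) = c.
  by rewrite mulmxA TU -mulmxA inprod_adj mulmxA Uu' mul1mx.
under [X in _ <= X]eq_bigr do rewrite ci.
have c0 : 0 <= c by apply: posdef_ge0.
rewrite sumr_const card_ord ger0_norm //.
have [->|phinz] := eqVneq phi0 0.
  under eq_bigr do rewrite mulmx0 -(scale0r (0 : 'cV[C]_m)) inprodZl rmorph0 mul0r normr0.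
  by rewrite sumr_const expr0n /= mul0rn mulrn_wge0 // exprn_ge0.
have cpos : 0 < c by apply: hT.2.
pose W := invmx T.
have TW : T *m W = 1%:M by apply: mulmxV.
have WT : W *m T = 1%:M by apply: mulVmx.
have hW : adjmx W = W.
  have : adjmx W *m T = 1%:M by rewrite -{1}hT.1 -adjmxM TW adjmx1.
  by move=> e; rewrite -[adjmx W]mulmx1 -TW mulmxA e mul1mx.
have Wpos u : 0 <= inprod u (W *m u).
  rewrite -{1}[u]mul1mx -TW -mulmxA -{1}hT.1 -inprod_adj; exact: posdef_ge0.
have WS : W = T *m S.
  by rewrite -[W]mulmx1 -(mulVmx Su) -eT !mulmxA WT mul1mx.
have trW : \tr W = c *+ n.
  rewrite WS -tr_frame; under eq_bigr do rewrite ci.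
  by rewrite sumr_const card_ord.
have trW' : \tr W = \sum_i inprod (mu' i) (W *m mu' i) by rewrite tr_frame hmu mulmx1.
apply: (@le_trans _ _ (\sum_i c * inprod (mu' i) (W *m mu' i))).
  apply: ler_sum => i _.
  have ex : inprod (T *m (U i *m phi0)) (W *m (T *m (U i *m phi0))) = c.
    by rewrite (mulmxA W) WT mul1mx -{1}hT.1 -inprod_adj ci.
  have ea : inprod (T *m (U i *m phi0)) (W *m mu' i) = inprod (U i *m phi0) (mu' i).
    by rewrite -{1}hT.1 -inprod_adj (mulmxA T) TW mul1mx.
  have := cs_form (x:=T *m (U i *m phi0)) (mu' i) hW Wpos; rewrite ex ea; exact.
by rewrite -mulr_sumr -trW' trW -mulrnAr.
Qed.
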